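(* Let $f:A\to B$ be a ring homomorphism, $\mathfrak b$ an ideal of $B$, and $A\bowtie^f\mathfrak b:=\{(a,f(a)+b): a\in A,\ b\in\mathfrak b\}\subseteq A\times B$. (1) If $A\bowtie^f\mathfrak b$ is an arithmetical ring, then $A$ is an arithmetical ring. (2) If $A\bowtie^f\mathfrak b$ is a Gauss ring, then $A$ is a Gauss ring.
   Context: All rings are commutative with identity. A ring is arithmetical if every finitely generated ideal is locally principal (principal after localizing at every maximal ideal). A ring $R$ is a Gauss ring if, for an indeterminate $T$, every $g\in R[T]$ satisfies $c(gh)=c(g)c(h)$ for all $h\in R[T]$, where $c(\cdot)$ is the ideal generated by the coefficients. *)

(* Defs.v *)
From HB Require Import structures.
From mathcomp Require Import all_boot all_algebra.
From mathcomp Require Import ring.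
Set Implicit Arguments.
Unset Strict Implicit.
Unset Printing Implicit Defensive.
Import GRing.Theory.
Local Open Scope ring_scope.

Record ideal (R : comNzRingType) := Ideal {
  ideal_pred :> {pred R};
  ideal0 : 0 \in ideal_pred;
  idealD : forall x y, x \in ideal_pred -> y \in ideal_pred -> x + y \in ideal_pred;
  idealMl : forall r x, x \in ideal_pred -> r * x \in ideal_pred }.

Section Amalgamation.
Variables (A B : comNzRingType) (f : {rmorphism A -> B}) (bI : ideal B).

(** A ⋈^f b = {(a, f a + b) | a in A, b in bI} = {(a, y) | y - f a in bI}. *)
Definition amalg_pred : {pred A * B} := fun x => x.2 - f x.1 \in bI.

Lemma idealN (x : B) : x \in bI -> - x \in bI.
Proof. by move=> Hx; rewrite -mulN1r; apply: idealMl. Qed.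

Lemma amalg_subring_closed : subring_closed amalg_pred.
Proof.
split.
- by rewrite /amalg_pred unfold_in /= rmorph1 subrr ideal0.
- move=> x y; rewrite /amalg_pred !unfold_in /= => Hx Hy.
  have -> : x.2 - y.2 - f (x.1 - y.1) = (x.2 - f x.1) + - (y.2 - f y.1).
    by rewrite rmorphB; ring.
  by apply: idealD => //; apply: idealN.
- move=> x y; rewrite /amalg_pred !unfold_in /= => Hx Hy.
  have -> : x.2 * y.2 - f (x.1 * y.1) = y.2 * (x.2 - f x.1) + f x.1 * (y.2 - f y.1).
    by rewrite rmorphM; ring.
  by apply: idealD; apply: idealMl.
Qed.

HB.instance Definition _ := GRing.isSubringClosed.Build (A * B)%type amalg_pred
  amalg_subring_closed.

Record amalgamation := Amalg {
  amalg_val : (A * B)%type;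
  amalg_valP : amalg_val \in amalg_pred }.
HB.instance Definition _ := [isSub for amalg_val].
HB.instance Definition _ := [Choice of amalgamation by <:].
HB.instance Definition _ := [SubChoice_isSubComNzRing of amalgamation by <:].

End Amalgamation.

Notation "A '⋈^' f bI" := (@amalgamation A _ f bI) (at level 40, f at level 0, only parsing).

Section RingNotions.
Variable R : comNzRingType.

Definition is_ideal (I : R -> Prop) : Prop :=
  [/\ I 0, (forall x y, I x -> I y -> I (x + y)) & (forall r x, I x -> I (r * x))].

Definition maximal_ideal (m : R -> Prop) : Prop :=
  [/\ is_ideal m, ~ m 1 &
      forall J : R -> Prop, is_ideal J -> (forall x, m x -> J x) -> ~ J 1 ->
        forall x, J x -> m x].

Definition span (s : seq R) : R -> Prop :=
  fun x => exists c : seq R, x = \sum_(i < size s) c`_i * s`_i.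

Definition finitely_generated (I : R -> Prop) : Prop :=
  exists s : seq R, forall x, I x <-> span s x.

(** Localization R_m at a maximal ideal m: fractions are pairs (r, s) with
    s not in m; (r, s) and (r', s') denote the same element iff
    u (r s' - r' s) = 0 for some u not in m. *)
Definition loc_eq (m : R -> Prop) (p q : R * R) : Prop :=
  exists u, ~ m u /\ u * (p.1 * q.2 - q.1 * p.2) = 0.

Definition loc_ideal (m : R -> Prop) (I : R -> Prop) (p : R * R) : Prop :=
  exists a s, [/\ I a, ~ m s & loc_eq m p (a, s)].

Definition loc_principal (m : R -> Prop) (I : R -> Prop) : Prop :=
  exists g : R * R, [/\ ~ m g.2, loc_ideal m I g &
    forall p : R * R, ~ m p.2 -> loc_ideal m I p ->
      exists c : R * R, ~ m c.2 /\ loc_eq m p (c.1 * g.1, c.2 * g.2)].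

Definition locally_principal (I : R -> Prop) : Prop :=
  forall m, maximal_ideal m -> loc_principal m I.

Definition arithmetical : Prop :=
  forall I : R -> Prop, is_ideal I -> finitely_generated I -> locally_principal I.

Definition content (p : {poly R}) : R -> Prop := span p.

Definition idealM (I J : R -> Prop) : R -> Prop :=
  fun x => exists s : seq (R * R),
    (forall q, q \in s -> I q.1 /\ J q.2) /\ x = \sum_(q <- s) q.1 * q.2.

Definition gauss_ring : Prop :=
  forall g h : {poly R}, forall x, content (g * h) x <-> idealM (content g) (content h) x.

End RingNotions.

(* Main.v *)
Require Import Defs.
From HB Require Import structures.
From mathcomp Require Import all_boot all_algebra.
Set Implicit Arguments. Unset Strict Implicit. Unset Printing Implicit Defensive.
Import GRing.Theory.
Local Open Scope ring_scope.

Section Gen.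
Variables (R : comNzRingType).

Lemma sum_widen0 n N (F : nat -> R) : (n <= N)%N -> (forall i, (n <= i)%N -> F i = 0) ->
  \sum_(i < n) F i = \sum_(i < N) F i.
Proof.
move=> le FZ; rewrite (big_ord_widen _ _ le) big_mkcond /=.
apply: eq_bigr => i _; case: ltnP => // h; by rewrite FZ.
Qed.

Definition spanN (s : seq R) x := exists n (c : seq R), x = \sum_(i < n) c`_i * s`_i.

Lemma spanNP s x : Defs.span s x <-> spanN s x.
Proof.
split; first by move=> [c ->]; exists (size s), c.
move=> [n [c ->]]; set N := maxn n (size s).
pose F i := (if (i < n)%N then c`_i else 0) * s`_i.
exists (mkseq (fun i => if (i < n)%N then c`_i else 0) N).
transitivity (\sum_(i < n) F i).
  by apply: eq_bigr => i _; rewrite /F ltn_ord.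
rewrite (sum_widen0 (n:=n) (N:=N)); last 2 first.
- exact: leq_maxl.
- by move=> i h; rewrite /F ltnNge h mul0r.
rewrite [RHS](sum_widen0 (n:=size s) (N:=N) (F:=fun i => (mkseq (fun i => if (i < n)%N then c`_i else 0) N)`_i * s`_i)); last 2 first.
- exact: leq_maxr.
- by move=> i h /=; rewrite [s`_i]nth_default // mulr0.
apply: eq_bigr => i _; rewrite /F nth_mkseq //; exact: leq_trans (ltn_ord i) (leq_maxr _ _).
Qed.

Lemma span_ideal (s : seq R) : is_ideal (Defs.span s).
Proof.
split.
- by exists [::]; rewrite big1 // => i _; rewrite nth_nil mul0r.
- move=> x y [c ->] [d ->].
  exists (mkseq (fun i => c`_i + d`_i) (size s)); rewrite -big_split /=.
  by apply: eq_bigr => i _; rewrite nth_mkseq // mulrDl.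
- move=> r x [c ->]; exists (mkseq (fun i => r * c`_i) (size s)).
  rewrite mulr_sumr; apply: eq_bigr => i _; by rewrite nth_mkseq // mulrA.
Qed.
End Gen.

Section Map.
Variables (R S : comNzRingType) (phi : {rmorphism R -> S}).

Lemma span_map (P : seq R) (Q : seq S) x :
  (forall i, Q`_i = phi P`_i) -> Defs.span P x -> Defs.span Q (phi x).
Proof.
move=> HQ /spanNP [n [c ->]]; apply/spanNP; exists n, (mkseq (fun i => phi c`_i) n).
rewrite rmorph_sum; apply: eq_bigr => i _; by rewrite nth_mkseq // rmorphM HQ.
Qed.

Lemma nth_map0 (s : seq R) i : (map phi s)`_i = phi s`_i.
Proof.
case: (ltnP i (size s)) => h; first exact: nth_map.
by rewrite !nth_default ?size_map // rmorph0.
Qed.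

Lemma idealM_map (I J : R -> Prop) (I' J' : S -> Prop) x :
  (forall y, I y -> I' (phi y)) -> (forall y, J y -> J' (phi y)) ->
  idealM I J x -> idealM I' J' (phi x).
Proof.
move=> HI HJ [s [Hs ->]]; exists (map (fun q => (phi q.1, phi q.2)) s); split.
- move=> q /mapP [q' /Hs [h1 h2] ->] /=; split; [exact: HI | exact: HJ].
- by rewrite big_map rmorph_sum; apply: eq_bigr => q _; rewrite rmorphM.
Qed.

Lemma loc_eq_map (m1 : R -> Prop) (m2 : S -> Prop) a b :
  (forall u, ~ m1 u -> ~ m2 (phi u)) ->
  loc_eq m1 a b -> loc_eq m2 (phi a.1, phi a.2) (phi b.1, phi b.2).
Proof.
move=> Hm [u [Hu He]]; exists (phi u); split; first exact: Hm.
by rewrite /= -!rmorphM -rmorphB -rmorphM He rmorph0.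
Qed.

Lemma loc_ideal_map (m1 : R -> Prop) (m2 : S -> Prop) (I1 : R -> Prop) (I2 : S -> Prop) a :
  (forall u, ~ m1 u -> ~ m2 (phi u)) -> (forall y, I1 y -> I2 (phi y)) ->
  loc_ideal m1 I1 a -> loc_ideal m2 I2 (phi a.1, phi a.2).
Proof.
move=> Hm HI [x [s [Hx Hs He]]]; exists (phi x), (phi s); split.
- exact: HI.
- exact: Hm.
- exact: (loc_eq_map Hm He).
Qed.
End Map.
Section Retract.
Variables (A B : comNzRingType) (f : {rmorphism A -> B}) (bI : ideal B).
Local Notation R := (amalgamation f bI).

Definition pr (x : R) : A := (val x).1.

Lemma pr_zmod : zmod_morphism pr.
Proof. by move=> x y; rewrite /pr rmorphB. Qed.
Lemma pr_monoid : monoid_morphism pr.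
Proof. by split; [rewrite /pr rmorph1 | move=> x y; rewrite /pr rmorphM]. Qed.
HB.instance Definition _ := GRing.isZmodMorphism.Build R A pr pr_zmod.
HB.instance Definition _ := GRing.isMonoidMorphism.Build R A pr pr_monoid.

Lemma sec_proof (a : A) : (a, f a) \in amalg_pred f bI.
Proof. by rewrite unfold_in /amalg_pred /= subrr ideal0. Qed.
Definition sec (a : A) : R := Amalg (sec_proof a).

Lemma sec_zmod : zmod_morphism sec.
Proof. by move=> x y; apply: val_inj; rewrite rmorphB /= rmorphB. Qed.
Lemma sec_monoid : monoid_morphism sec.
Proof. split; first by apply: val_inj; rewrite rmorph1 /= rmorph1.
by move=> x y; apply: val_inj; rewrite rmorphM /= rmorphM. Qed.
HB.instance Definition _ := GRing.isZmodMorphism.Build A R sec sec_zmod.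
HB.instance Definition _ := GRing.isMonoidMorphism.Build A R sec sec_monoid.

Lemma prK (a : A) : pr (sec a) = a.
Proof. by []. Qed.
End Retract.

Theorem proposition4p7 (A B : comNzRingType) (f : {rmorphism A -> B}) (bI : ideal B) :
  (arithmetical (amalgamation f bI) -> arithmetical A) /\
  (gauss_ring (amalgamation f bI) -> gauss_ring A).
Proof.
set R := amalgamation f bI.
pose p : {rmorphism R -> A} := @pr A B f bI.
pose s : {rmorphism A -> R} := @sec A B f bI.
have psK : forall a, p (s a) = a by [].
split.
- move=> arR I HI [t Ht] m Hm.
  pose J := Defs.span (map s t).
  have HJ : is_ideal J by apply: span_ideal.
  pose M := fun x : R => m (p x).
  have [[m0 mD mM] m1 mmax] := Hm.
  have HM : maximal_ideal M.
    split.
    + split; rewrite /M.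
      * by rewrite rmorph0.
      * by move=> x y hx hy; rewrite rmorphD; apply: mD.
      * by move=> r x hx; rewrite rmorphM; apply: mM.
    + by rewrite /M rmorph1.
    + move=> K [K0 KD KM] MK nK1 x Kx.
      pose K' := fun y : A => exists x, K x /\ p x = y.
      have HK' : is_ideal K'.
        split.
        * by exists 0; split; rewrite ?rmorph0.
        * move=> _ _ [x1 [h1 <-]] [x2 [h2 <-]]; exists (x1 + x2).
          by split; [apply: KD | rewrite rmorphD].
        * move=> r _ [x1 [h1 <-]]; exists (s r * x1).
          by split; [apply: KM | rewrite rmorphM psK].
      apply: (mmax K' HK').
      * move=> y my; exists (s y); split => //; apply: MK; by rewrite /M psK.
      * move=> [y [Ky py1]]; apply: nK1.
        have -> : (1 : R) = y + (1 - y) by rewrite addrC subrK.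
        apply: KD => //; apply: MK; by rewrite /M rmorphB rmorph1 py1 subrr.
      * by exists x.
  have Jfg : finitely_generated J by exists (map s t).
  have [g [Hg2 Hgl Hgu]] := arR J HJ Jfg M HM.
  have JI : forall y, J y -> I (p y).
    move=> y Jy; apply/Ht; apply: (span_map (P:=map s t)) Jy => i.
    by rewrite nth_map0 psK.
  have IJ : forall y, I y -> J (s y).
    move=> y /Ht Iy; apply: (span_map (P:=t)) Iy => i.
    by rewrite nth_map0.
  exists (p g.1, p g.2); split => //.
  + exact: (loc_ideal_map (phi:=p) (m1:=M) (fun u h => h) JI Hgl).
  + move=> [r q] /= Hq Hl.
    have Hl' := loc_ideal_map (phi:=s) (m1:=m) (m2:=M) (fun u h => h) IJ Hl.
    have [c [Hc Heq]] := Hgu (s r, s q) Hq Hl'.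
    exists (p c.1, p c.2); split => //.
    have := loc_eq_map (phi:=p) (m1:=M) (m2:=m) (fun u h => h) Heq.
    by rewrite /= !psK !rmorphM.
- move=> gR g h x.
  have cs : forall (P : {poly A}) y, content P y -> content (map_poly s P) (s y).
    move=> P y; apply: span_map => i; by rewrite coef_map.
  have cp : forall (P : {poly A}) y, content (map_poly s P) y -> content P (p y).
    move=> P y; apply: span_map => i; by rewrite coef_map psK.
  split.
  + move=> /cs; rewrite rmorphM => /gR H.
    by have := idealM_map (phi:=p) (cp g) (cp h) H; rewrite psK.
  + move=> H; have := idealM_map (phi:=s) (cs g) (cs h) H.
    move=> /gR; rewrite -rmorphM => /cp; by rewrite psK.
Qed.
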